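(* Up to graph isomorphism, there is exactly one graph with exactly three vertices that is isomorphic to $\Gamma_E(R)$ for some commutative Noetherian ring $R$ with unity.
   Context: For $x,y\in R$ write $x\sim y$ iff $\operatorname{ann}(x)=\operatorname{ann}(y)$; $[x]$ denotes the equivalence class of $x$. Let $Z^*(R)$ be the set of nonzero zero divisors of $R$. The graph $\Gamma_E(R)$ is the simple graph whose vertices are the classes $[x]$ with $x\in Z^*(R)$, two distinct vertices $[x],[y]$ being adjacent iff $xy=0$ (this is independent of representatives). *)

(* Defs.v *)
From HB Require Import structures.
From mathcomp Require Import all_boot all_algebra.
Set Implicit Arguments. Unset Strict Implicit. Unset Printing Implicit Defensive.
Import GRing.Theory.
Local Open Scope ring_scope.

(* Ideals of a commutative ring, as predicates (closure under negation
   follows from closure under multiplication by -1). *)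
Definition is_ideal (R : comNzRingType) (I : R -> Prop) : Prop :=
  I 0 /\ (forall x y, I x -> I y -> I (x + y)) /\ (forall r x, I x -> I (r * x)).

Definition noetherian (R : comNzRingType) : Prop :=
  forall I : nat -> R -> Prop,
    (forall n, is_ideal (I n)) ->
    (forall n x, I n x -> I n.+1 x) ->
    exists N : nat, forall n x, (N <= n)%N -> I n x -> I N x.

Definition nz_zero_divisor (R : comNzRingType) (x : R) : Prop :=
  x <> 0 /\ exists y : R, y <> 0 /\ x * y = 0.

Definition ann_equiv (R : comNzRingType) (x y : R) : Prop :=
  forall z : R, x * z = 0 <-> y * z = 0.

Definition simple_graph (n : nat) (G : rel 'I_n) : Prop :=
  (forall i, ~~ G i i) /\ (forall i j, G i j = G j i).

Definition graph_iso (n : nat) (G1 G2 : rel 'I_n) : Prop :=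
  exists f : 'I_n -> 'I_n, bijective f /\ forall i j, G1 i j = G2 (f i) (f j).

(* Gamma_E(R) is isomorphic to G : rel 'I_n, given via a choice of
   representatives f i of the n vertices (classes [f i]): the map i |-> [f i]
   is a bijection from 'I_n onto the vertex set {[x] | x in Z^*(R)}, and
   it maps edges to edges:  G i j  iff  [f i] <> [f j] and f i * f j = 0. *)
Definition gammaE_iso (R : comNzRingType) (n : nat) (G : rel 'I_n) : Prop :=
  exists f : 'I_n -> R,
    (forall i, nz_zero_divisor (f i)) /\
    (forall i j, ann_equiv (f i) (f j) -> i = j) /\
    (forall x, nz_zero_divisor x -> exists i, ann_equiv x (f i)) /\
    (forall i j, G i j <-> (i <> j /\ f i * f j = 0)).

Definition realizable (n : nat) (G : rel 'I_n) : Prop :=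
  exists R : comNzRingType, noetherian R /\ gammaE_iso R G.

(* Main.v *)
Require Import Defs.
From mathcomp Require Import all_boot all_algebra all_fingroup.
From mathcomp Require Import zify.
From Stdlib Require Import Classical ClassicalEpsilon.
Set Implicit Arguments. Unset Strict Implicit. Unset Printing Implicit Defensive.
Import GRing.Theory.
Local Open Scope ring_scope.

Definition o0 : 'I_3 := @Ordinal 3 0 isT.
Definition o1 : 'I_3 := @Ordinal 3 1 isT.
Definition o2 : 'I_3 := @Ordinal 3 2 isT.

Lemma I3_cases (i : 'I_3) : i = o0 \/ i = o1 \/ i = o2.
Proof.
case: i => [[|[|[|m]]] Hm]; [left|right;left|right;right|]; try by apply/val_inj.
by [].
Qed.

Lemma third (i j : 'I_3) : exists k, k != i /\ k != j.
Proof.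
case: (I3_cases i) => [->|[->|->]]; case: (I3_cases j) => [->|[->|->]];
  first [by exists o0 | by exists o1 | by exists o2].
Qed.

Lemma comb (e : rel 'I_3) : (forall i j, e i j = e j i) -> (forall i, e i i = false) ->
  ~ (forall p q, p != q -> e p q) -> (forall i, exists j, e i j) ->
  exists k, forall i j, e i j = ((i == k) != (j == k)).
Proof.
move=> sym irr ntri nbr.
have e10 : e o1 o0 = e o0 o1 by rewrite sym.
have e20 : e o2 o0 = e o0 o2 by rewrite sym.
have e21 : e o2 o1 = e o1 o2 by rewrite sym.
have n0 : e o0 o1 || e o0 o2.
  have [j H] := nbr o0.
  by case: (I3_cases j) H => [->|[->|->]]; rewrite ?irr // => ->; rewrite ?orbT.
have n1 : e o0 o1 || e o1 o2.
  have [j H] := nbr o1.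
  by case: (I3_cases j) H => [->|[->|->]]; rewrite ?irr ?e10 // => ->; rewrite ?orbT.
have n2 : e o0 o2 || e o1 o2.
  have [j H] := nbr o2.
  by case: (I3_cases j) H => [->|[->|->]]; rewrite ?irr ?e20 ?e21 // => ->; rewrite ?orbT.
have nt : ~~ [&& e o0 o1, e o0 o2 & e o1 o2].
  apply/negP => /and3P [h1 h2 h3]; apply: ntri => p q.
  by case: (I3_cases p) => [->|[->|->]]; case: (I3_cases q) => [->|[->|->]];
    rewrite ?e10 ?e20 ?e21 ?h1 ?h2 ?h3.
move: n0 n1 n2 nt; case E01: (e o0 o1); case E02: (e o0 o2);
  case E12: (e o1 o2) => //= _ _ _ _.
- exists o0 => i j; case: (I3_cases i) => [->|[->|->]]; case: (I3_cases j) => [->|[->|->]];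
  by rewrite ?irr ?e10 ?e20 ?e21 ?E01 ?E02 ?E12.
- exists o1 => i j; case: (I3_cases i) => [->|[->|->]]; case: (I3_cases j) => [->|[->|->]];
  by rewrite ?irr ?e10 ?e20 ?e21 ?E01 ?E02 ?E12.
- exists o2 => i j; case: (I3_cases i) => [->|[->|->]]; case: (I3_cases j) => [->|[->|->]];
  by rewrite ?irr ?e10 ?e20 ?e21 ?E01 ?E02 ?E12.
Qed.

Section Ring.
Variables (R : comNzRingType) (f : 'I_3 -> R).
Hypothesis H1 : forall i, nz_zero_divisor (f i).
Hypothesis H2 : forall i j, ann_equiv (f i) (f j) -> i = j.
Hypothesis H3 : forall x, nz_zero_divisor x -> exists i, ann_equiv x (f i).

Lemma zd_of (x y : R) : x <> 0 -> y <> 0 -> x * y = 0 -> nz_zero_divisor x.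
Proof. by move=> x0 y0 xy; split => //; exists y. Qed.

Lemma sq_pair (tri : forall p q, p != q -> f p * f q = 0) i j :
  i != j -> f i * f i = 0 \/ f j * f j = 0.
Proof.
move=> ij; have [k [ki kj]] := third i j.
have nz : f i + f j <> 0.
  move=> h; move/eqP: ij; apply; apply: H2 => z.
  have -> : f j = - f i by apply/eqP; rewrite -addr_eq0 addrC h.
  rewrite mulNr; split => h'; first by rewrite h' oppr0.
  by rewrite -[f i * z]opprK h' oppr0.
have fk0 : f k <> 0 by case: (H1 k).
have zd : nz_zero_divisor (f i + f j).
  apply: (zd_of nz fk0).
  by rewrite mulrDl !tri ?addr0 // eq_sym.
have [m Hm] := H3 zd.
case: (eqVneq m i) => [mi | mi].
- right; have := proj2 (Hm (f j)); rewrite mi tri // => /(_ erefl).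
  by rewrite mulrDl tri // add0r.
- left; have := proj2 (Hm (f i)); rewrite tri // => /(_ erefl).
  by rewrite mulrDl (tri j) ?addr0 // eq_sym.
Qed.

Lemma sq_kill (tri : forall p q, p != q -> f p * f q = 0) p :
  f p * f p = 0 -> forall z, nz_zero_divisor z -> f p * z = 0.
Proof.
move=> sq z Hz; have [m Hm] := H3 Hz.
rewrite mulrC; apply/(proj2 (Hm (f p))).
by case: (eqVneq m p) => [->|mp] //; rewrite tri.
Qed.

Lemma sq_unique (tri : forall p q, p != q -> f p * f q = 0) i j :
  i != j -> f i * f i = 0 -> f j * f j = 0 -> False.
Proof.
move=> ij si sj; move/eqP: ij; apply; apply: H2 => z.
case: (eqVneq z 0) => [->|z0]; first by rewrite !mulr0.
have fi0 : f i <> 0 by case: (H1 i).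
have fj0 : f j <> 0 by case: (H1 j).
split => h.
- apply: (sq_kill tri sj); apply: (zd_of (y := f i)) => //; first exact/eqP.
  by rewrite mulrC.
- apply: (sq_kill tri si); apply: (zd_of (y := f j)) => //; first exact/eqP.
  by rewrite mulrC.
Qed.

Lemma no_tri : ~ (forall p q, p != q -> f p * f q = 0).
Proof.
move=> tri.
case: (sq_pair tri (i:=o0) (j:=o1) isT) => [s0|s1].
- case: (sq_pair tri (i:=o1) (j:=o2) isT) => [s1|s2].
  + exact: (sq_unique tri (i:=o0) (j:=o1) isT).
  + exact: (sq_unique tri (i:=o0) (j:=o2) isT).
- case: (sq_pair tri (i:=o0) (j:=o2) isT) => [s0|s2].
  + exact: (sq_unique tri (i:=o0) (j:=o1) isT).
  + exact: (sq_unique tri (i:=o1) (j:=o2) isT).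
Qed.

Lemma has_nbr i : exists j, j != i /\ f i * f j = 0.
Proof.
case: (boolP [exists j, (j != i) && (f i * f j == 0)]) =>
  [/existsP [j /andP [ji /eqP h]] | /existsPn Hn]; first by exists j.
exfalso.
have Hno : forall j, j != i -> f i * f j <> 0.
  by move=> j ji h; move: (Hn j); rewrite ji h eqxx.
have Hi : forall m, f i * f m = 0 -> m = i.
  by move=> m h; case: (eqVneq m i) => // mi; case: (Hno m mi h).
have fi0 : f i <> 0 by case: (H1 i).
have [_ [y [y0 xy]]] := H1 i.
have [m Hm] := H3 (zd_of y0 fi0 (etrans (mulrC _ _) xy)).
have sq : f i * f i = 0.
  have hm := proj1 (Hm (f i)) (etrans (mulrC _ _) xy).
  have mi : m = i by apply: Hi; rewrite mulrC.
  by rewrite -{1}mi.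
have [k [ki _]] := third i i.
have xz : f i * f k <> 0 := Hno k ki.
have [_ [t [t0 zt]]] := H1 k.
have [e [e0 [xe ze]]] : exists e, e <> 0 /\ f i * e = 0 /\ f k * e = 0.
  case: (eqVneq (f i * t) 0) => h; first by exists t.
  exists (f i * t); split; first exact/eqP.
  by rewrite mulrA sq mul0r mulrCA zt mulr0.
have [m' Hm'] := H3 (zd_of e0 fi0 (etrans (mulrC _ _) xe)).
have : f m' * f i = 0 by apply/(proj1 (Hm' (f i))); rewrite mulrC.
rewrite mulrC => /Hi mi.
apply: xz; rewrite -mi; apply/(proj1 (Hm' (f k))); by rewrite mulrC.
Qed.

Lemma center (G : rel 'I_3) (H4 : forall i j, G i j <-> (i <> j /\ f i * f j = 0)) :
  exists k, forall i j, G i j = ((i == k) != (j == k)).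
Proof.
have [k Hk] : exists k, forall i j,
    ((i != j) && (f i * f j == 0)) = ((i == k) != (j == k)).
  apply: (@comb (fun i j => (i != j) && (f i * f j == 0))).
  - by move=> i j /=; rewrite eq_sym mulrC.
  - by move=> i /=; rewrite eqxx.
  - move=> h; apply: no_tri => p q pq.
    by have /andP [_ /eqP] := h p q pq.
  - move=> i; have [j [ji h]] := has_nbr i.
    by exists j; rewrite /= eq_sym ji h eqxx.
exists k => i j; rewrite -Hk /=; apply/idP/idP.
- by move/H4 => [ij h]; rewrite h eqxx andbT; apply/eqP.
- by move/andP => [/eqP ij /eqP h]; apply/H4.
Qed.
End Ring.

Lemma realizable_center (G : rel 'I_3) : realizable G ->
  exists k, forall i j, G i j = ((i == k) != (j == k)).
Proof.
move=> [R [_ [f [H1 [H2 [H3 H4]]]]]].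
exact: (center H1 H2 H3 H4).
Qed.

Lemma iso_centers (G1 G2 : rel 'I_3) k1 k2 :
  (forall i j, G1 i j = ((i == k1) != (j == k1))) ->
  (forall i j, G2 i j = ((i == k2) != (j == k2))) -> graph_iso G1 G2.
Proof.
move=> h1 h2; exists (tperm k1 k2); split; first exact: (inv_bij (tpermK k1 k2)).
have E : forall x, (tperm k1 k2 x == k2) = (x == k1).
  move=> x; apply/eqP/eqP => [h|->]; last exact: tpermL.
  by apply: (@perm_inj _ (tperm k1 k2)); rewrite h tpermL.
by move=> i j; rewrite h1 h2 !E.
Qed.

Lemma fin_acc (T : finType) (I : nat -> T -> Prop) :
  (forall n x, I n x -> I n.+1 x) ->
  exists N : nat, forall n x, (N <= n)%N -> I n x -> I N x.
Proof.
move=> mono.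
pose b n x := if excluded_middle_informative (I n x) then true else false.
have bP : forall n x, b n x = true <-> I n x.
  by move=> n x; rewrite /b; case: excluded_middle_informative.
pose S n := [set x | b n x].
have monoS : forall n m, (n <= m)%N -> S n \subset S m.
  move=> n m /subnK <-; elim: (m - n)%N => [|d IH]; first by rewrite add0n.
  apply: subset_trans IH _; apply/subsetP => x; rewrite !inE => /bP h.
  by apply/bP; rewrite addSn; exact: mono.
suff: forall d N, (#|T| - #|S N| <= d)%N ->
    exists N', forall n, (N' <= n)%N -> S n \subset S N'.
  move=> H; have [N' HN] := H _ 0%N (leqnn _).
  exists N' => n x le /bP hx; apply/bP.
  have := subsetP (HN n le) x; rewrite !inE; apply; by rewrite hx.
elim=> [|d IH] N hd.
- exists N => n le; have sub := monoS _ _ le.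
  have c1 : (#|S n| <= #|T|)%N by apply: max_card.
  have /eqP-> : S N == S n by rewrite eqEcard sub /=; lia.
  exact: subxx.
- case: (classic (exists n, (N <= n)%N /\ ~~ (S n \subset S N))) =>
    [[n [le ns]]|nex].
  + have pr : S N \proper S n by rewrite properE monoS.
    have c := proper_card pr.
    have c1 : (#|S n| <= #|T|)%N by apply: max_card.
    by apply: (IH n); lia.
  + exists N => n le; apply/negPn/negP => h; apply: nex; by exists n.
Qed.

Definition f16 (i : 'I_3) : 'Z_16 := (2 ^ i.+1)%N%:R.

Lemma Z16_ind (P : 'Z_16 -> Prop) :
  (forall m (H : (m < 16)%N), P (@Ordinal 16 m H)) -> forall x, P x.
Proof. by move=> H [m Hm]; apply: H. Qed.

Lemma eq0iff (R : comNzRingType) (a b : R) : (a == 0) = (b == 0) -> (a = 0 <-> b = 0).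
Proof. by move=> h; split => /eqP; [rewrite h | rewrite -h] => /eqP. Qed.

Lemma iffeq0 (R : comNzRingType) (a b : R) : (a = 0 <-> b = 0) -> (a == 0) = (b == 0).
Proof. by move=> [h1 h2]; apply/eqP/eqP. Qed.

Theorem corollary1p6 :
  (exists G : rel 'I_3, simple_graph G /\ realizable G) /\
  (forall G1 G2 : rel 'I_3, simple_graph G1 -> simple_graph G2 ->
     realizable G1 -> realizable G2 -> graph_iso G1 G2).
Proof.
split; last first.
  move=> G1 G2 _ _ /realizable_center [k1 h1] /realizable_center [k2 h2].
  exact: iso_centers h1 h2.
exists (fun i j => (i != j) && (f16 i * f16 j == 0)); split.
  split; first by move=> i; rewrite eqxx.
  by move=> i j; rewrite eq_sym mulrC.
exists 'Z_16%type; split.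
  by move=> I _; apply: fin_acc.
exists f16; split; [|split; [|split]].
- move=> i; split.
    by case: (I3_cases i) => [->|[->|->]]; apply/eqP.
  exists 8%:R; split; first by apply/eqP.
  by case: (I3_cases i) => [->|[->|->]]; apply/eqP.
- move=> i j h; move: (iffeq0 (h 2%:R)) (iffeq0 (h 4%:R)).
  by case: (I3_cases i) => [->|[->|->]]; case: (I3_cases j) => [->|[->|->]].
- apply: Z16_ind => m Hm.
  do 16! (case: m Hm => [|m] Hm; first (
    first [ by case=> h _; exfalso; apply: h; apply: val_inj
          | by case=> _ [y [y0 xy]]; exfalso; apply: y0;
               have hu : (@Ordinal 16 _ Hm : 'Z_16) \is a GRing.unit by [];
               rewrite -(mulKr hu y) xy mulr0
          | move=> _; exists o0 => z; move: z; apply: Z16_ind => m' Hm'; apply: eq0iff;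
               do 16! (case: m' Hm' => [|m'] Hm'; first by []); by []
          | move=> _; exists o1 => z; move: z; apply: Z16_ind => m' Hm'; apply: eq0iff;
               do 16! (case: m' Hm' => [|m'] Hm'; first by []); by []
          | move=> _; exists o2 => z; move: z; apply: Z16_ind => m' Hm'; apply: eq0iff;
               do 16! (case: m' Hm' => [|m'] Hm'; first by []); by [] ])).
  by [].
- move=> i j; split.
  + by move/andP => [/eqP ij /eqP h].
  + by move=> [ij h]; rewrite h eqxx andbT; apply/eqP.
Qed.
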